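(* Let $C$ be an $(n,(n-k)/2,\delta;\mu)_q$ convolutional code over $\mathbf F_q$ such that $C\subseteq C^\perp$ (Euclidean dual). Then there exists an $[(n,k,n\mu;\delta,d_f)]_q$ convolutional stabilizer code with $d_f=\mathrm{wt}(C^\perp\setminus C)$. It is pure if $\mathrm{wt}(C^\perp\setminus C)=\mathrm{wt}(C^\perp)$.
   Context: Classical convolutional codes: An $(n,k,\delta;\mu)_q$ convolutional code is a submodule $\{u(D)G(D)\}$ of $\mathbf F_q[D]^n$ generated by a right-invertible $G(D)=(g_{ij})\in\mathbf F_q[D]^{k\times n}$ with $\nu_i=\max_j\deg g_{ij}$, degree $\delta=\sum\nu_i$ equal to the maximal degree of a $k\times k$ minor, memory $\mu=\max\nu_i$. Weight = number of nonzero coefficients; for a set $A$, $\mathrm{wt}(A)$ is the minimal weight of a nonzero element. $\Gamma_q$ = finitely supported sequences over $\mathbf F_q$; $\sigma$ maps $(u_0,\dots,u_{n-1})\in\mathbf F_q[D]^n$ to the coefficients of $\sum_iD^iu_i(D^n)$; codes are identified with their images. Euclidean dual $C^\perp=\{u\in\Gamma_q:\sum_iu_iv_i=0\ \forall v\in C\}$. Quantum setup: $X(a)|x\rangle=|x+a\rangle$, $Z(b)|x\rangle=\omega^{\mathrm{tr}(bx)}|x\rangle$ on $\mathbf C^q$ ($\omega=e^{2\pi i/p}$, $p=\mathrm{char}\,\mathbf F_q$), $I=X(0)$. $P_t$ is the group generated by $((t+1)n+m)$-fold tensor products of the $X(a),Z(b)$, with center $Z_t$; $P_\infty$ the group of infinite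 tensor products with almost all factors $I$. For abelian $S_0\le P_0$, $S_t=\langle N\otimes I^{\otimes n},I^{\otimes tn}\otimes M: N\in S_{t-1},M\in S_0\rangle$, with conditions (S1) $I^{\otimes tn}\otimes M$, $N\otimes I^{\otimes tn}$ commute for $M,N\in S_0$, $t\ge1$; (S2) $\dim_{\mathbf F_q}S_tZ_t/Z_t=(t+1)(n-k)$; (S3) $S_t\cap Z_t$ trivial. $S=\langle I^{\otimes tn}\otimes M\otimes I^{\otimes\infty}\rangle$; its $+1$-eigenspace is an $[(n,k,m)]_q$ convolutional stabilizer code. Weight of $E\in P_\infty$ = number of non-identity factors; $d_f=\min\{\mathrm{wt}(e): e\in C_{P_\infty}(S)\setminus Z(P_\infty)S\}$. With normal basis $(\beta,\beta^q)$ of $\mathbf F_{q^2}/\mathbf F_q$, $\tau(\omega^cX(a_0)Z(b_0)\otimes\cdots)=(\beta a_0+\beta^qb_0,\dots)$; the degree of the quantum code is the degree of $\sigma^{-1}\tau(S)$. $[(n,k,m;\delta,d_f)]_q$ denotes a code of degree $\delta$ and free distance $d_f$. Pure: the stabilizer contains no element of weight less than $d_f$ other than scalars. *)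

(* Defs.v *)
From HB Require Import structures.
From mathcomp Require Import all_boot all_order all_algebra all_field.
Set Implicit Arguments.
Unset Strict Implicit.
Unset Printing Implicit Defensive.
Import GRing.Theory.
Local Open Scope ring_scope.

Definition is_min (P : nat -> Prop) (d : nat) : Prop :=
  P d /\ forall e, P e -> (d <= e)%N.

(* Finitely supported sequences Gamma_q are represented by polynomials        *)
(* (the sequence of coefficients); codes are identified with their images     *)
(* under sigma, i.e. are sets of polynomials (= elements of Gamma).           *)

Section ConvCodes.
Variable K : fieldType.

Definition sigma (n : nat) (u : 'rV[{poly K}]_n) : {poly K} :=
  \sum_(i < n) 'X^i * ((u 0 i) \Po 'X^n).

Definition row_deg (kk n : nat) (G : 'M[{poly K}]_(kk, n)) (i : 'I_kk) : nat :=
  (\max_(j < n) (size (G i j)).-1)%N.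

Definition max_minor_deg (kk n : nat) (G : 'M[{poly K}]_(kk, n)) : nat :=
  (\max_(f : {ffun 'I_kk -> 'I_n} | injectiveb f)
      (size (\det (colsub f G))).-1)%N.

Definition is_conv_code (n kk delta mu : nat) (C : {poly K} -> Prop) : Prop :=
  exists G : 'M[{poly K}]_(kk, n),
    [/\ (exists H : 'M[{poly K}]_(n, kk), G *m H = 1%:M),
        delta = (\sum_(i < kk) row_deg G i)%N,
        delta = max_minor_deg G,
        mu = (\max_(i < kk) row_deg G i)%N &
        (forall v, C v <-> exists u : 'rV[{poly K}]_kk, v = sigma (u *m G))].

Definition seq_wt (v : {poly K}) : nat := count (fun c => c != 0) v.

Definition is_min_wt (A : {poly K} -> Prop) (d : nat) : Prop :=
  is_min (fun w => exists v, [/\ A v, v != 0 & seq_wt v = w]) d.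

Definition edual (C : {poly K} -> Prop) : {poly K} -> Prop :=
  fun v => forall u, C u -> \sum_(i < size u) u`_i * v`_i = 0.

End ConvCodes.

(* p = char F, q = #|F| = p^r.  The element omega^c X(a) Z(b) of P_infty      *)
(* (a, b finitely supported sequences over F) is represented by the triple    *)
(* (c, a, b) with c in Z/pZ and a, b polynomials (coefficient sequences).     *)

Section Pauli.
Variable F : finFieldType.

Definition pchr : nat := pdiv #|F|.
Definition fdeg : nat := logn pchr #|F|.

Definition ftr (x : F) : F := \sum_(i < fdeg) x ^+ (pchr ^ i).

(* the trace, read as an element of Z/pZ (prime field k%:R <-> k) *)
Definition trZ (x : F) : 'Z_pchr :=
  odflt 0 [pick k : 'Z_pchr | ((k : nat)%:R : F) == ftr x].

Record pauli := Pauli { ph : 'Z_pchr; xa : {poly F}; zb : {poly F} }.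

Definition pone : pauli := Pauli 0 0 0.

(* (w^c X(a)Z(b)) (w^c' X(a')Z(b')) = w^(c+c'+tr(b.a')) X(a+a') Z(b+b') *)
Definition pmul (g h : pauli) : pauli :=
  Pauli (ph g + ph h + trZ (\sum_(i < size (zb g)) (zb g)`_i * (xa h)`_i))
        (xa g + xa h) (zb g + zb h).

(* (w^c X(a)Z(b))^-1 = w^(-c + tr(b.a)) X(-a) Z(-b) *)
Definition pinv (g : pauli) : pauli :=
  Pauli (- ph g + trZ (\sum_(i < size (zb g)) (zb g)`_i * (xa g)`_i))
        (- xa g) (- zb g).

Definition pcommute (g h : pauli) : Prop := pmul g h = pmul h g.

(* tensoring on the left with I^{s}:  I^{(x) s} (x) g *)
Definition pshift (s : nat) (g : pauli) : pauli :=
  Pauli (ph g) (xa g * 'X^s) (zb g * 'X^s).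

(* P_N : tensor products of N factors (padded with I^{(x) infty}) *)
Definition inP (N : nat) (g : pauli) : Prop :=
  (size (xa g) <= N)%N /\ (size (zb g) <= N)%N.

Definition Pinf (g : pauli) : Prop := True.

Definition pwt (g : pauli) : nat :=
  count (fun i => ((xa g)`_i != 0) || ((zb g)`_i != 0))
        (iota 0 (maxn (size (xa g)) (size (zb g)))).

Inductive gen (A : pauli -> Prop) : pauli -> Prop :=
| gen_one : gen A pone
| gen_in g : A g -> gen A g
| gen_mul g h : gen A g -> gen A h -> gen A (pmul g h)
| gen_inv g : gen A g -> gen A (pinv g).

Definition is_subgroup (A : pauli -> Prop) : Prop :=
  [/\ A pone, forall g h, A g -> A h -> A (pmul g h) & forall g, A g -> A (pinv g)].

Definition is_abelian (A : pauli -> Prop) : Prop :=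
  forall g h, A g -> A h -> pcommute g h.

Definition center (G : pauli -> Prop) (z : pauli) : Prop :=
  G z /\ forall g, G g -> pcommute z g.

Definition centralizer (G A : pauli -> Prop) (e : pauli) : Prop :=
  G e /\ forall s, A s -> pcommute e s.

(* the vector (a_0..a_{N-1} | b_0..b_{N-1}) in F_q^{2N}: image of g in P_t/Z_t *)
Definition symvec (N : nat) (g : pauli) : 'rV[F]_(N + N) :=
  row_mx (\row_(i < N) (xa g)`_i) (\row_(i < N) (zb g)`_i).

Section Stab.
Variables (n k m : nat) (S0 : pauli -> Prop).

(* number of qudits of P_t *)
Definition Nt (t : nat) : nat := ((t + 1) * n + m)%N.

Fixpoint Sfam (t : nat) : pauli -> Prop :=
  match t with
  | 0 => S0
  | t'.+1 => gen (fun g => Sfam t' g \/ exists M, S0 M /\ g = pshift (t'.+1 * n) M)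
  end.

Definition Sfull : pauli -> Prop :=
  gen (fun g => exists t M, S0 M /\ g = pshift (t * n) M).

Definition condS1 : Prop :=
  forall t, (1 <= t)%N -> forall M N, S0 M -> S0 N -> pcommute (pshift (t * n) M) N.

(* dim_{F_q} S_t Z_t / Z_t = (t+1)(n-k): the image of S_t in F_q^{2N_t}
   is an F_q-subspace of dimension (t+1)(n-k), the row space of a
   row-free (t+1)(n-k) x 2N_t matrix B. *)
Definition condS2 : Prop :=
  forall t, exists B : 'M[F]_((t + 1) * (n - k), Nt t + Nt t),
    row_free B /\
    forall v : 'rV[F]_(Nt t + Nt t),
      (exists g, Sfam t g /\ symvec (Nt t) g = v) <-> (v <= B)%MS.

Definition condS3 : Prop :=
  forall t g, Sfam t g -> center (inP (Nt t)) g -> g = pone.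

Definition is_conv_stab_code : Prop :=
  [/\ (forall g, S0 g -> inP (n + m) g),
      is_subgroup S0, is_abelian S0, condS1 & (condS2 /\ condS3)].

Definition free_dist (d : nat) : Prop :=
  is_min (fun w => exists e,
             [/\ centralizer Pinf Sfull e,
                 ~ (exists z s, [/\ center Pinf z, Sfull s & e = pmul z s])
               & pwt e = w]) d.

Definition is_pure (d : nat) : Prop :=
  forall g, Sfull g -> (pwt g < d)%N -> center Pinf g.

(* degree of the quantum code: degree of sigma^{-1} tau (S), where
   tau uses the normal basis (beta, beta^q) of L = F_{q^2} over F_q. *)
Definition tau (L : fieldExtType F) (beta : L) (g : pauli) : {poly L} :=
  \poly_(i < maxn (size (xa g)) (size (zb g)))
     ((xa g)`_i *: beta + (zb g)`_i *: beta ^+ #|F|).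

Definition has_degree (L : fieldExtType F) (beta : L) (delta : nat) : Prop :=
  exists kk mu', is_conv_code n kk delta mu' (fun v => exists g, Sfull g /\ v = tau beta g).

End Stab.
End Pauli.

(* Main.v *)
Require Import Defs.
From HB Require Import structures.
From mathcomp Require Import all_boot all_order all_algebra all_field.
From mathcomp Require Import zify.
From Stdlib Require Import Classical.
Import GRing.Theory.
Local Open Scope ring_scope.
Set Implicit Arguments.
Unset Strict Implicit.

Section Tr.
Variable F : finFieldType.

Lemma pchr_facts : [/\ prime (pchr F), (pchr F) \in [pchar F] & #|F| = (pchr F ^ fdeg F)%N].
Proof.
have [p pp pc] := finPcharP F.
have hc : #|F| = (p ^ logn p #|F|)%N := card_pprimeChar pc.
have gt1 : (1 < #|F|)%N by apply: finNzRing_gt1.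
have lg : (0 < logn p #|F|)%N.
  case E: (logn p #|F|) => [|r] //; move: hc gt1; rewrite E expn0 => -> //.
have Hp : pchr F = p.
  rewrite /pchr hc; move: lg; case: (logn p #|F|) => // r _.
  by rewrite pdiv_pfactor.
by rewrite /fdeg Hp; split.
Qed.

Local Notation p := (pchr F).
Local Notation r := (fdeg F).

Lemma p_gt1 : (1 < p)%N.
Proof. by case: pchr_facts => /prime_gt1. Qed.

Lemma natr_inj_p (k1 k2 : nat) : (k1 < p)%N -> (k2 < p)%N ->
  (k1%:R : F) = k2%:R -> k1 = k2.
Proof.
case: pchr_facts => _ pc _.
wlog le12 : k1 k2 / (k1 <= k2)%N.
  move=> W h1 h2 e; case: (leqP k1 k2) => h; first exact: W.
  by apply/esym/W => //; apply: ltnW.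
move=> h1 h2 e.
have : (p %| k2 - k1)%N by rewrite (dvdn_pcharf pc) natrB // e subrr.
move/dvdn_leq; case E: (k2 - k1)%N => [|d]; first by move=> _; lia.
by move=> /(_ isT); lia.
Qed.

Lemma Zp_lt (k : 'Z_p) : (k < p)%N.
Proof. by have h := ltn_ord k; have e := Zp_cast p_gt1; rewrite -{2}e. Qed.

Lemma trZ_spec x (k : 'Z_p) : ((k : nat)%:R : F) = ftr x -> trZ x = k.
Proof.
move=> hk; rewrite /trZ; case: pickP => [k' /eqP h | h] /=.
  by apply: val_inj; apply: natr_inj_p; rewrite ?Zp_lt // h hk.
by move: (h k); rewrite hk eqxx.
Qed.

Lemma ftr0 : ftr (0 : F) = 0.
Proof. by rewrite /ftr big1 // => i _; rewrite expr0n expn_eq0; have := p_gt1; case: (p) => [|[|]]. Qed.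

Lemma trZ0 : trZ (0 : F) = 0.
Proof. by apply: trZ_spec; rewrite ftr0. Qed.

Lemma inZp_val (k : nat) : (k < p)%N -> ((inZp k : 'Z_p) : nat) = k.
Proof. by move=> h /=; rewrite Zp_cast ?p_gt1 // modn_small. Qed.

Lemma frob_fix z : z ^+ p = z -> exists k : 'Z_p, ((k : nat)%:R : F) = z.
Proof.
case: pchr_facts => pp pc _ hz.
case: (boolP [exists k : 'Z_p, ((k : nat)%:R : F) == z]) => [/existsP [k /eqP] hk|/existsPn h].
  by exists k.
exfalso.
pose P : {poly F} := 'X^p - 'X.
pose s := z :: [seq (k%:R : F) | k <- iota 0 p].
have P0 : P != 0.
  apply/eqP=> e; have := congr1 (fun q : {poly F} => q`_p) e.
  rewrite /P coefB coefXn coefX eqxx coef0.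
  have -> : (p == 1%N) = false by apply/negbTE; have := p_gt1; case: (p) => [|[|]].
  by move/eqP; rewrite subr0 oner_eq0.
have rts : all (root P) s.
  apply/allP=> x; rewrite inE => /orP [/eqP ->|/mapP [k _ ->]];
    rewrite /root /P !hornerE; first by rewrite hz subrr.
  by rewrite -(pFrobenius_autE pc) pFrobenius_aut_nat subrr.
have us : uniq s.
  rewrite /= map_inj_in_uniq ?iota_uniq ?andbT.
    apply/mapP=> [[k]]; rewrite mem_iota add0n => hk e.
    by move: (h (inZp k)); rewrite inZp_val // e eqxx.
  by move=> a b; rewrite !mem_iota !add0n => ha hb; apply: natr_inj_p.
have := max_poly_roots P0 rts us.
rewrite /= size_map size_iota /P.
have : (size ('X^p - 'X : {poly F})%R <= p.+1)%N.
  by apply: leq_trans (size_polyD _ _) _; rewrite size_polyXn size_polyN size_polyX geq_max leqnn; have := p_gt1; case: (p) => [|[|]].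
move=> h1 h2; have := leq_trans h2 h1; by rewrite ltnn.
Qed.

Lemma r_gt0 : (0 < r)%N.
Proof.
case: pchr_facts => _ _ hc; have := finNzRing_gt1 F; rewrite hc.
by case: (r) => //; rewrite expn0.
Qed.

Lemma ftr_frob (y : F) : ftr y ^+ p = ftr y.
Proof.
case: pchr_facts => _ pc hc.
rewrite -(pFrobenius_autE pc) /ftr rmorph_sum /=.
under eq_bigr => i _ do rewrite pFrobenius_autE -exprM -expnSr.
have := r_gt0; move: hc; case: (r) => // r' hc _.
rewrite big_ord_recr big_ord_recl /= expn0 expr1.
have -> : y ^+ (p ^ r'.+1) = y by rewrite -hc expf_card.
by rewrite addrC.
Qed.

Lemma ftr_nz : exists y : F, ftr y != 0.
Proof.
case: pchr_facts => pp pc hc.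
case: (boolP [exists y : F, ftr y != 0]) => [/existsP [y hy]|/existsPn h]; first by exists y.
exfalso.
pose P : {poly F} := \sum_(i < r) 'X^(p ^ i).
have hP y : P.[y] = ftr y by rewrite /P horner_sum; apply: eq_bigr => i _; rewrite hornerXn.
have := r_gt0; case Er: r => [//|r'] _.
have P0 : P != 0.
  apply/eqP=> e; have e' := congr1 (fun q : {poly F} => q`_(p ^ r')) e.
  move: e'; rewrite /= coef0 /P coef_sum Er big_ord_recr /= coefXn eqxx big1 ?add0r.
    by move/eqP; rewrite oner_eq0.
  move=> i _; rewrite coefXn eqn_exp2l ?prime_gt1 //; have hi := ltn_ord i.
  by rewrite /= (_ : (r' == i) = false) //; apply/negbTE; rewrite neq_ltn hi orbT.
have rts : all (root P) (enum F).
  by apply/allP=> y _; rewrite /root hP; move: (h y); rewrite negbK.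
have := max_poly_roots P0 rts (enum_uniq _).
have : (size P <= (p ^ r').+1)%N.
  rewrite /P; apply: (big_ind (fun q : {poly F} => size q <= (p ^ r').+1)%N).
  - by rewrite size_poly0.
  - by move=> a b ha hb; apply: leq_trans (size_polyD _ _) _; rewrite geq_max ha hb.
  - move=> i _; rewrite size_polyXn ltnS leq_exp2l ?prime_gt1 //.
    by have hi := ltn_ord i; move: hi; rewrite {2}Er ltnS.
rewrite -cardE hc Er expnS => h1 h2; have := leq_trans h2 h1.
have : (1 < p)%N by apply: prime_gt1.
have : (0 < p ^ r')%N by rewrite expn_gt0 prime_gt0.
nia.
Qed.

Lemma trZ_nonconst : exists y : F, trZ y != trZ 0.
Proof.
have [y hy] := ftr_nz.
have [k hk] := frob_fix (ftr_frob y).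
exists y; rewrite trZ0 (trZ_spec hk).
by apply/eqP => e; move: hy; rewrite -hk e /= eqxx.
Qed.

Lemma trZ_key (x : F) : (forall l : F, trZ (l * x) = trZ 0) -> x = 0.
Proof.
move=> h; case: (eqVneq x 0) => // nx.
have [y hy] := trZ_nonconst.
by move: (h (y / x)); rewrite mulfVK // => e; move: hy; rewrite e eqxx.
Qed.

End Tr.

Lemma nodiv_aux (n j i i' : nat) : (i < n)%N -> (i' < n)%N -> i <> i' ->
  (i' <= j*n+i)%N -> ~~ (n %| j*n + i - i')%N.
Proof.
move=> h1 h2 h3 h4. apply/negP => /dvdnP [c hc].
case: (ltngtP c j) => hcj.
- have : (c.+1 * n <= j * n)%N by rewrite leq_mul2r hcj orbT. lia.
- have : (j.+1 * n <= c * n)%N by rewrite leq_mul2r hcj orbT. lia.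
- subst; lia.
Qed.

Section Sigma.
Variables (K : fieldType) (n : nat).
Implicit Types u v : 'rV[{poly K}]_n.

Lemma sigmaD u v : sigma (u + v) = sigma u + sigma v.
Proof. by rewrite /sigma -big_split; apply: eq_bigr => i _; rewrite mxE comp_polyD mulrDr. Qed.

Lemma sigma0 : sigma (0 : 'rV[{poly K}]_n) = 0.
Proof. by rewrite /sigma big1 // => i _; rewrite mxE comp_poly0 mulr0. Qed.

Lemma sigmaZ (q : {poly K}) u : sigma (q *: u) = (q \Po 'X^n) * sigma u.
Proof.
rewrite /sigma mulr_sumr; apply: eq_bigr => i _.
by rewrite mxE comp_polyM mulrCA.
Qed.

Lemma sigmaN u : sigma (- u) = - sigma u.
Proof. by apply/eqP; rewrite -subr_eq0 opprK -sigmaD addNr sigma0. Qed.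

Lemma sigma_sum (I : Type) (r : seq I) (P : pred I) (f : I -> 'rV[{poly K}]_n) :
  sigma (\sum_(i <- r | P i) f i) = \sum_(i <- r | P i) sigma (f i).
Proof.
elim/big_rec2: _ => [|i x y _ <-]; first by rewrite sigma0.
by rewrite sigmaD.
Qed.

Lemma coef_sigma u j (i : 'I_n) : (sigma u)`_(j * n + i) = (u 0 i)`_j.
Proof.
have n0 : (0 < n)%N by apply: leq_ltn_trans (ltn_ord i).
rewrite /sigma coef_sum (bigD1 i) //= big1 ?addr0.
  rewrite coefXnM ltnNge leq_addl /= addnK coef_comp_poly_Xn // dvdn_mull //.
  by rewrite mulnK.
move=> i' ne; rewrite coefXnM; case: ltnP => // hle.
rewrite coef_comp_poly_Xn //.
rewrite (negbTE (nodiv_aux (ltn_ord i) (ltn_ord i') _ hle)) //.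
by move=> e; move/eqP: ne; apply; apply: val_inj.
Qed.

Lemma sigma_inj u : sigma u = 0 -> u = 0.
Proof.
move=> h; apply/rowP => i; rewrite mxE; apply/polyP => j.
by rewrite -coef_sigma h coef0 coef0.
Qed.

Lemma size_sigma u (s : nat) : (forall i, (size (u 0%R i) <= s.+1)%N) ->
  (size (sigma u) <= n + n * s)%N.
Proof.
move=> hs; rewrite /sigma.
apply: (big_ind (fun q : {poly K} => size q <= n + n * s)%N).
- by rewrite size_poly0.
- by move=> a b ha hb; apply: leq_trans (size_polyD _ _) _; rewrite geq_max ha hb.
move=> i _; apply: leq_trans (size_polyMleq _ _) _.
rewrite size_polyXn /=.
have := size_comp_poly_leq (u 0 i) 'X^n; rewrite size_polyXn /= => h.
have h2 := hs i; have h3 := ltn_ord i.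
have : ((size (u 0%R i)).-1 * n <= s * n)%N by rewrite leq_mul2r; apply/orP; right; lia.
rewrite [(s * n)%N]mulnC => h4; move: h4 h h3; set a := ((size _).-1 * n)%N; set b := size _; move=> *; lia.
Qed.

Lemma sigma_map (L : fieldType) (f : {rmorphism K -> L}) u :
  sigma (map_mx (map_poly f) u) = map_poly f (sigma u).
Proof.
rewrite /sigma rmorph_sum; apply: eq_bigr => i _.
by rewrite mxE rmorphM /= map_comp_poly !map_polyXn.
Qed.

End Sigma.

Section Rep.
Variables (F : fieldType) (n kk mu : nat) (G : 'M[{poly F}]_(kk, n)) (H : 'M[{poly F}]_(n, kk)).
Hypothesis hGH : G *m H = 1%:M.
Hypothesis hGsz : forall i j, (size (G i j) <= mu.+1)%N.

Definition gv (w : 'rV[F]_kk) : {poly F} := sigma (map_mx polyC w *m G).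
Definition Umx (t : nat) (W : nat -> 'rV[F]_kk) : 'rV[{poly F}]_kk :=
  \sum_(j < t.+1) 'X^j *: map_mx polyC (W j).
Definition rep (t : nat) (W : nat -> 'rV[F]_kk) : {poly F} :=
  \sum_(j < t.+1) 'X^(j * n) * gv (W j).

Lemma rep_Umx t W : rep t W = sigma (Umx t W *m G).
Proof.
rewrite /rep /Umx mulmx_suml sigma_sum; apply: eq_bigr => j _.
by rewrite -scalemxAl sigmaZ comp_Xn_poly -exprM mulnC.
Qed.

Lemma gvD w1 w2 : gv (w1 + w2) = gv w1 + gv w2.
Proof. by rewrite /gv map_mxD mulmxDl sigmaD. Qed.

Lemma gvN w : gv (- w) = - gv w.
Proof. by rewrite /gv map_mxN mulNmx sigmaN. Qed.

Lemma gv0 : gv 0 = 0.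
Proof. by rewrite /gv map_mx0 mul0mx sigma0. Qed.

Lemma gvZ c w : gv (c *: w) = c%:P * gv w.
Proof.
rewrite /gv -[c%:P](comp_polyC c 'X^n) -sigmaZ scalemxAl; congr (sigma (_ *m _)).
by apply/rowP => i; rewrite !mxE polyCM.
Qed.

Lemma repD t W1 W2 : rep t (fun j => W1 j + W2 j) = rep t W1 + rep t W2.
Proof. by rewrite /rep -big_split; apply: eq_bigr => j _; rewrite gvD mulrDr. Qed.

Lemma repN t W : rep t (fun j => - W j) = - rep t W.
Proof. by rewrite /rep -sumrN; apply: eq_bigr => j _; rewrite gvN mulrN. Qed.

Lemma rep0 t : rep t (fun _ => 0) = 0.
Proof. by rewrite /rep big1 // => j _; rewrite gv0 mulr0. Qed.

Lemma repZ t c W : rep t (fun j => c *: W j) = c%:P * rep t W.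
Proof. by rewrite /rep mulr_sumr; apply: eq_bigr => j _; rewrite gvZ mulrCA. Qed.

Lemma repS t W : rep t.+1 W = rep t W + 'X^(t.+1 * n) * gv (W t.+1).
Proof. by rewrite /rep big_ord_recr. Qed.

Lemma rep_ext t W1 W2 : (forall j, (j < t.+1)%N -> W1 j = W2 j) -> rep t W1 = rep t W2.
Proof. by move=> h; apply: eq_bigr => j _; rewrite h. Qed.

Lemma rep_mono t W : rep t W = rep t.+1 (fun j => if (j < t.+1)%N then W j else 0).
Proof.
rewrite repS ltnn gv0 mulr0 addr0; apply: rep_ext => j ->; done.
Qed.

Lemma coef_Umx t W i j : (j < t.+1)%N -> ((Umx t W) 0 i)`_j = W j 0 i.
Proof.
move=> hj; rewrite /Umx summxE coef_sum (bigD1 (Ordinal hj)) //= big1 ?addr0.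
  by rewrite !mxE mulrC mul_polyC coefZ coefXn eqxx mulr1.
move=> l ne; rewrite !mxE mulrC mul_polyC coefZ coefXn.
by rewrite (_ : (j == l) = false) ?mulr0 //; apply/negbTE; apply: contra ne => /eqP e; apply/eqP/val_inj.
Qed.

Lemma rep_inj t W : rep t W = 0 -> forall j, (j < t.+1)%N -> W j = 0.
Proof.
rewrite rep_Umx => /sigma_inj h0 j hj.
have U0 : Umx t W = 0.
  by rewrite -[Umx t W]mulmx1 -hGH mulmxA h0 mul0mx.
apply/rowP => i; rewrite mxE -(coef_Umx W i hj) U0 mxE coef0 //.
Qed.

Lemma size_Umx t W i : (size (Umx t W 0%R i) <= t.+1)%N.
Proof.
rewrite /Umx summxE.
apply: (big_ind (fun q : {poly F} => size q <= t.+1)%N).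
- by rewrite size_poly0.
- by move=> a b ha hb; apply: leq_trans (size_polyD _ _) _; rewrite geq_max ha hb.
move=> j _; rewrite !mxE mulrC mul_polyC.
apply: leq_trans (size_scale_leq _ _) _; rewrite size_polyXn; exact: ltn_ord.
Qed.

Lemma size_rep t W : (size (rep t W) <= t.+1 * n + n * mu)%N.
Proof.
rewrite rep_Umx.
have -> : (t.+1 * n + n * mu = n + n * (t + mu))%N by rewrite mulnDr mulSn; lia.
apply: size_sigma => j; rewrite mxE.
apply: (big_ind (fun q : {poly F} => size q <= (t + mu).+1)%N).
- by rewrite size_poly0.
- by move=> a b ha hb; apply: leq_trans (size_polyD _ _) _; rewrite geq_max ha hb.
move=> i _; apply: leq_trans (size_polyMleq _ _) _.
have := size_Umx t W i; have := hGsz i j.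
case: (size (Umx t W 0%R i)) => [|a]; case: (size (G i j)) => [|b] //=; lia.
Qed.

Lemma rep_of_u (u : 'rV[{poly F}]_kk) : exists t W, sigma (u *m G) = rep t W.
Proof.
pose t := (\max_(i < kk) size (u 0%R i))%N.
exists t, (fun j => \row_i (u 0 i)`_j); rewrite rep_Umx; congr (sigma (_ *m _)).
apply/rowP => i; apply/polyP => j.
have hs : (size (u 0%R i) <= t.+1)%N by apply: leqW; exact: (@leq_bigmax _ (fun i : 'I_kk => size (u 0%R i)) i).
case: (ltnP j t.+1) => hj; first by rewrite coef_Umx // mxE.
rewrite nth_default; last exact: leq_trans hs hj.
rewrite /Umx summxE coef_sum big1 // => l _.
rewrite !mxE mulrC mul_polyC coefZ coefXn.
by rewrite (_ : (j == l) = false) ?mulr0 //; apply/negbTE; have := ltn_ord l; lia.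
Qed.

Lemma shift_u (u : 'rV[{poly F}]_kk) s :
  sigma (u *m G) * 'X^(s * n) = sigma (('X^s *: u) *m G).
Proof. by rewrite -scalemxAl sigmaZ comp_Xn_poly -exprM mulrC mulnC. Qed.

End Rep.

Notation dotp u v := (\sum_(i < size u) u`_i * v`_i).

Section Dot.
Variable K : fieldType.
Implicit Types u v : {poly K}.

Lemma dotp_widen u v M : (size u <= M)%N -> dotp u v = \sum_(i < M) u`_i * v`_i.
Proof.
move=> h; rewrite (big_ord_widen _ (fun i => u`_i * v`_i) h) big_mkcond /=.
apply: eq_bigr => i _; case: ltnP => // hi.
by rewrite nth_default // mul0r.
Qed.

Lemma dotpC u v : dotp u v = dotp v u.
Proof.
rewrite (@dotp_widen u v _ (leq_maxl (size u) (size v))).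
rewrite (@dotp_widen v u _ (leq_maxr (size u) (size v))).
by apply: eq_bigr => i _; rewrite mulrC.
Qed.

Lemma dotp0l v : dotp (0 : {poly K}) v = 0.
Proof. by rewrite size_poly0 big_ord0. Qed.

Lemma dotp0r u : dotp u (0 : {poly K}) = 0.
Proof. by rewrite big1 // => i _; rewrite coef0 mulr0. Qed.

Lemma dotpZr u c v : dotp u (c *: v) = c * dotp u v.
Proof. by rewrite mulr_sumr; apply: eq_bigr => i _; rewrite coefZ mulrCA. Qed.

Lemma dotpXn u c i : dotp u (c *: 'X^i) = c * u`_i.
Proof.
rewrite dotpZr (@dotp_widen u 'X^i _ (leq_maxl (size u) i.+1)).
have hi : (i < maxn (size u) i.+1)%N by rewrite leq_max ltnSn orbT.
rewrite (bigD1 (Ordinal hi)) //= coefXn eqxx mulr1 big1 ?addr0 // => j ne.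
rewrite coefXn (_ : (j == i :> nat) = false) ?mulr0 //.
by apply/negbTE; apply: contra ne => /eqP e; apply/eqP/val_inj.
Qed.

End Dot.

Lemma pauli_eta (F : finFieldType) (g : pauli F) : g = Pauli (ph g) (xa g) (zb g).
Proof. by case: g. Qed.

Lemma center_vec (F : finFieldType) (A : pauli F -> Prop) z :
  (forall i (l : F), A (Pauli 0 (l *: 'X^i) 0) /\ A (Pauli 0 0 (l *: 'X^i))) ->
  (forall g, A g -> pcommute z g) -> xa z = 0 /\ zb z = 0.
Proof.
move=> hA hc; split; apply/polyP => i; rewrite coef0; apply: trZ_key => l.
- have := hc _ (proj2 (hA i l)); rewrite /pcommute /pmul /= => e.
  have e1 := congr1 (@ph F) e; move: e1 => /=.
  rewrite dotp0r dotpC dotpXn addr0 add0r => /addrI; done.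
- have := hc _ (proj1 (hA i l)); rewrite /pcommute /pmul /= => e.
  have e1 := congr1 (@ph F) e; move: e1 => /=.
  rewrite dotp0l dotpXn addr0 add0r => /addrI; done.
Qed.

Lemma gen_sub (F : finFieldType) (A B : pauli F -> Prop) :
  (forall g, A g -> B g) -> B (pone F) ->
  (forall g h, B g -> B h -> B (pmul g h)) -> (forall g, B g -> B (pinv g)) ->
  forall g, gen A g -> B g.
Proof. by move=> hA h1 hM hI g; elim=> //; auto. Qed.

Section Stab1.
Variables (F : finFieldType) (n kk mu : nat) (G : 'M[{poly F}]_(kk, n)) (H : 'M[{poly F}]_(n, kk)).
Variable C : {poly F} -> Prop.
Hypothesis hGH : G *m H = 1%:M.
Hypothesis hGsz : forall i j, (size (G i j) <= mu.+1)%N.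
Hypothesis hCG : forall v, C v <-> exists u, v = sigma (u *m G).
Hypothesis hself : forall v, C v -> edual C v.

Definition Vt t (a : {poly F}) := exists W, a = rep G t W.
Definition Good (g : pauli F) := [/\ ph g = 0, C (xa g) & C (zb g)].
Definition Pt t (g : pauli F) := [/\ ph g = 0, Vt t (xa g) & Vt t (zb g)].
Definition S0 := Pt 0.

Lemma C_rep a : C a <-> exists t, Vt t a.
Proof.
rewrite hCG; split=> [[u ->]|[t [W ->]]].
  by have [t [W e]] := rep_of_u G u; exists t, W.
by exists (Umx t W); rewrite rep_Umx.
Qed.

Lemma Vt_C t a : Vt t a -> C a.
Proof. by move=> h; apply/C_rep; exists t. Qed.

Lemma C_dot a b : C a -> C b -> dotp a b = 0.
Proof. by move=> ha hb; apply: (hself hb). Qed.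

Lemma C0 : C 0.
Proof. by apply/hCG; exists 0; rewrite mul0mx sigma0. Qed.

Lemma CD a b : C a -> C b -> C (a + b).
Proof. by move=> /hCG [u ->] /hCG [v ->]; apply/hCG; exists (u + v); rewrite mulmxDl sigmaD. Qed.

Lemma CN a : C a -> C (- a).
Proof. by move=> /hCG [u ->]; apply/hCG; exists (- u); rewrite mulNmx sigmaN. Qed.

Lemma CZ (c : F) a : C a -> C (c%:P * a).
Proof.
move=> /hCG [u ->]; apply/hCG; exists (c%:P *: u).
by rewrite -scalemxAl sigmaZ comp_polyC.
Qed.

Lemma CshiftX a s : C a -> C (a * 'X^(s * n)).
Proof. by move=> /hCG [u ->]; apply/hCG; exists ('X^s *: u); rewrite shift_u. Qed.

Lemma Vt0 t : Vt t 0.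
Proof. by exists (fun _ => 0); rewrite rep0. Qed.

Lemma VtD t a b : Vt t a -> Vt t b -> Vt t (a + b).
Proof. by move=> [W1 ->] [W2 ->]; exists (fun j => W1 j + W2 j); rewrite repD. Qed.

Lemma VtN t a : Vt t a -> Vt t (- a).
Proof. by move=> [W ->]; exists (fun j => - W j); rewrite repN. Qed.

Lemma VtZ t (c : F) a : Vt t a -> Vt t (c%:P * a).
Proof. by move=> [W ->]; exists (fun j => c *: W j); rewrite repZ. Qed.

Lemma Vt_mono t a : Vt t a -> Vt t.+1 a.
Proof. by move=> [W ->]; eexists; apply: rep_mono. Qed.

Lemma Vt_mono_le t t' a : (t <= t')%N -> Vt t a -> Vt t' a.
Proof.
move=> /subnK <- h; elim: (t' - t)%N => [|d IH]; first by rewrite add0n.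
by rewrite addSn; apply: Vt_mono.
Qed.

Lemma rep0E W : rep G 0 W = gv G (W 0%N).
Proof. by rewrite /rep big_ord1 /= mul0n expr0 mul1r. Qed.

Lemma VtS t a : Vt t.+1 a <->
  exists b c, [/\ Vt t b, Vt 0 c & a = b + c * 'X^(t.+1 * n)].
Proof.
split.
  move=> [W ->]; exists (rep G t W), (gv G (W t.+1)); split.
  - by exists W.
  - by exists (fun _ => W t.+1); rewrite rep0E.
  - by rewrite repS mulrC.
move=> [b [c [[Wb ->] [Wc ->] ->]]].
exists (fun j => if (j < t.+1)%N then Wb j else Wc 0%N).
rewrite repS ltnn rep0E mulrC; congr (_ + _).
by apply: rep_ext => j ->.
Qed.

Lemma pmul_good g h : Good g -> Good h -> pmul g h = Pauli 0 (xa g + xa h) (zb g + zb h).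
Proof.
case=> pg _ cg [ph' ch _]; rewrite /pmul pg ph' (C_dot cg ch) trZ0.
by rewrite !addr0.
Qed.

Lemma pinv_good g : Good g -> pinv g = Pauli 0 (- xa g) (- zb g).
Proof. by case=> pg ca cb; rewrite /pinv pg (C_dot cb ca) trZ0 oppr0 addr0. Qed.

Lemma good_comm g h : Good g -> Good h -> pcommute g h.
Proof. by move=> hg hh; rewrite /pcommute !pmul_good // addrC [zb g + _]addrC. Qed.

Lemma Pt_good t g : Pt t g -> Good g.
Proof. by case=> p a b; split => //; [apply: (Vt_C a) | apply: (Vt_C b)]. Qed.

Lemma Pt_subgroup t : is_subgroup (Pt t).
Proof.
split.
- by split => //=; apply: Vt0.
- move=> g h hg hh; rewrite (pmul_good (Pt_good hg) (Pt_good hh)).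
  by case: hg => _ ag bg; case: hh => _ ah bh; split => //=; apply: VtD.
- move=> g hg; rewrite (pinv_good (Pt_good hg)).
  by case: hg => _ ag bg; split => //=; apply: VtN.
Qed.

Lemma Sfam_Pt t g : Sfam n S0 t g -> Pt t g.
Proof.
elim: t g => [//|t IH] g /=.
have [h1 hM hI] := Pt_subgroup t.+1.
apply: gen_sub => //.
move=> x [/IH hx | [M [hM0 ->]]].
  by case: hx => p a b; split => //; apply: Vt_mono.
case: hM0 => p a b; split => //=; apply/VtS.
- exists 0, (xa M); split => //; [exact: Vt0 | by rewrite add0r].
- exists 0, (zb M); split => //; [exact: Vt0 | by rewrite add0r].
Qed.

Lemma Pt_Sfam t g : Pt t g -> Sfam n S0 t g.
Proof.
elim: t g => [//|t IH] g [pg /VtS [a1 [c1 [ha1 hc1 ea]]] /VtS [b1 [c2 [hb1 hc2 eb]]]] /=.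
have good1 : Good (Pauli 0 a1 b1) by split => //=; apply: Vt_C; eauto.
have goodx : Good (Pauli 0 (c1 * 'X^(t.+1 * n)) 0).
  by split => //=; [apply: CshiftX; apply: Vt_C hc1 | apply: C0].
have goodz : Good (Pauli 0 0 (c2 * 'X^(t.+1 * n))).
  by split => //=; [apply: C0 | apply: CshiftX; apply: Vt_C hc2].
have -> : g = pmul (Pauli 0 a1 b1) (pmul (Pauli 0 (c1 * 'X^(t.+1 * n)) 0) (Pauli 0 0 (c2 * 'X^(t.+1 * n)))).
  rewrite (pmul_good goodx goodz) /= pmul_good //=; last first.
    by split => //=; [rewrite addr0 | rewrite add0r]; apply: CshiftX; apply: Vt_C; eauto.
  by rewrite (pauli_eta g) pg ea eb add0r addr0.
apply: gen_mul; first by apply: gen_in; left; apply: IH; split.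
apply: gen_mul; apply: gen_in; right.
- exists (Pauli 0 c1 0); split; last by rewrite /pshift /= mul0r.
  by split => //; apply: Vt0.
- exists (Pauli 0 0 c2); split; last by rewrite /pshift /= mul0r.
  by split => //; apply: Vt0.
Qed.

Lemma Sfam_Sfull t g : Sfam n S0 t g -> Sfull n S0 g.
Proof.
elim: t g => [|t IH] g /=.
  by move=> h; apply: gen_in; exists 0%N, g; split => //; rewrite (pauli_eta g) /pshift mul0n expr0 !mulr1.
apply: gen_sub; [| exact: gen_one | exact: gen_mul | exact: gen_inv].
move=> x [/IH // | [M [hM ->]]].
by apply: gen_in; exists t.+1, M.
Qed.

Lemma Sfull_good g : Sfull n S0 g <-> Good g.
Proof.
split.
  apply: gen_sub.
  - move=> x [t [M [hM ->]]]; have [p a b] := Pt_good hM.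
    by split => //=; apply: CshiftX.
  - by split => //; apply: C0.
  - move=> a b ga gb; rewrite pmul_good //.
    by case: ga => _ ? ?; case: gb => _ ? ?; split => //=; apply: CD.
  - move=> a ga; rewrite pinv_good //.
    by case: ga => _ ? ?; split => //=; apply: CN.
case=> pg /C_rep [t1 h1] /C_rep [t2 h2].
apply: (@Sfam_Sfull (maxn t1 t2)); apply: Pt_Sfam; split => //.
- by apply: Vt_mono_le h1; apply: leq_maxl.
- by apply: Vt_mono_le h2; apply: leq_maxr.
Qed.

End Stab1.

Lemma center_vecN (F : finFieldType) (A : pauli F -> Prop) (N : nat) z :
  (forall i (l : F), (i < N)%N -> A (Pauli 0 (l *: 'X^i) 0) /\ A (Pauli 0 0 (l *: 'X^i))) ->
  (size (xa z) <= N)%N -> (size (zb z) <= N)%N ->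
  (forall g, A g -> pcommute z g) -> xa z = 0 /\ zb z = 0.
Proof.
move=> hA sa sb hc; split; apply/polyP => i; rewrite coef0;
  (case: (ltnP i N) => hi; last by rewrite nth_default // (leq_trans _ hi));
  apply: trZ_key => l.
- have := hc _ (proj2 (hA i l hi)); rewrite /pcommute /pmul /= => e.
  have e1 := congr1 (@ph F) e; move: e1 => /=.
  rewrite dotp0r dotpC dotpXn addr0 add0r => /addrI; done.
- have := hc _ (proj1 (hA i l hi)); rewrite /pcommute /pmul /= => e.
  have e1 := congr1 (@ph F) e; move: e1 => /=.
  rewrite dotp0l dotpXn addr0 add0r => /addrI; done.
Qed.

Lemma lin_mx_eq (F : fieldType) m M (f : 'rV[F]_m -> 'rV[F]_M) :
  (forall a x y, f (a *: x + y) = a *: f x + f y) ->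
  forall x, x *m \matrix_(r < m) f (delta_mx 0 r) = f x.
Proof.
move=> hf x.
have f0 : f 0 = 0.
  by have := hf 1 0 0; rewrite !scale1r addr0 => e; apply/(addrI (f 0)); rewrite addr0 -e.
rewrite mulmx_sum_row {2}(row_sum_delta x).
elim/big_rec2: _ => [|i y1 y2 _ ->]; first by rewrite f0.
by rewrite hf rowK.
Qed.

Lemma poly_trunc0 (F : fieldType) (p : {poly F}) N :
  (size p <= N)%N -> (\row_(i < N) p`_i) = 0 -> p = 0.
Proof.
move=> hs h; apply/polyP => i; rewrite coef0.
case: (ltnP i N) => hi; last by rewrite nth_default // (leq_trans hs hi).
by have := congr1 (fun v : 'rV_N => v 0 (Ordinal hi)) h; rewrite !mxE.
Qed.

Section Stab2.
Variables (F : finFieldType) (n k kk mu : nat) (G : 'M[{poly F}]_(kk, n)) (H : 'M[{poly F}]_(n, kk)).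
Variable C : {poly F} -> Prop.
Hypothesis hGH : G *m H = 1%:M.
Hypothesis hGsz : forall i j, (size (G i j) <= mu.+1)%N.
Hypothesis hCG : forall v, C v <-> exists u, v = sigma (u *m G).
Hypothesis hself : forall v, C v -> edual C v.
Hypothesis hk2 : (n - k = kk + kk)%N.

Local Notation S0 := (S0 G).
Local Notation Pt := (Pt G).

Lemma size_Vt t a : Vt G t a -> (size a <= Nt n (n * mu) t)%N.
Proof. by case=> W ->; rewrite /Nt addn1; apply: size_rep. Qed.

Lemma Pt_inP t g : Pt t g -> inP (Nt n (n * mu) t) g.
Proof. by case=> _ ha hb; split; apply: size_Vt. Qed.

Lemma S0_inP g : S0 g -> inP (n + n * mu) g.
Proof. by move=> /Pt_inP; rewrite /Nt add0n mul1n. Qed.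

Lemma condS3_ok : condS3 n (n * mu) S0.
Proof.
rewrite /condS3 /center => t g hs [hin hc]; have hg := Sfam_Pt hCG hself hs.
have [pg _ _] := hg.
have [ea eb] : xa g = 0 /\ zb g = 0.
  have [sa sb] := hin.
  apply: (@center_vecN F (inP (Nt n (n * mu) t)) _ g _ sa sb hc).
  move=> i l hi; rewrite /inP /=; split; split; rewrite ?size_poly0 //;
    apply: leq_trans (size_scale_leq _ _) _; by rewrite size_polyXn.
by rewrite (pauli_eta g) pg ea eb.
Qed.

Section T.
Variable t : nat.
Local Notation R := ((t + 1) * (n - k))%N.
Local Notation N := (Nt n (n * mu) t).

Definition xn (x : 'rV[F]_R) (r : nat) : F := \sum_(i < R | val i == r) x 0 i.
Definition WX (x : 'rV[F]_R) (j : nat) : 'rV[F]_kk := \row_(i < kk) xn x (j * (n - k) + i).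
Definition WZ (x : 'rV[F]_R) (j : nat) : 'rV[F]_kk := \row_(i < kk) xn x (j * (n - k) + kk + i).
Definition phi (x : 'rV[F]_R) : 'rV[F]_(N + N) :=
  symvec N (Pauli 0 (rep G t (WX x)) (rep G t (WZ x))).
Definition Bmx : 'M[F]_(R, N + N) := \matrix_(r < R) phi (delta_mx 0 r).

Lemma xn_lin a x y r : xn (a *: x + y) r = a * xn x r + xn y r.
Proof. by rewrite /xn mulr_sumr -big_split; apply: eq_bigr => i _; rewrite !mxE. Qed.

Lemma xn_ord x (r : 'I_R) : xn x r = x 0 r.
Proof.
rewrite /xn (big_pred1 r) // => i /=.
Qed.

Lemma symvec_lin (a : F) (p1 p2 q1 q2 : {poly F}) :
  symvec N (Pauli 0 (a%:P * p1 + p2) (a%:P * q1 + q2)) =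
  a *: symvec N (Pauli 0 p1 q1) + symvec N (Pauli 0 p2 q2).
Proof.
rewrite /symvec /= scale_row_mx add_row_mx.
by congr (row_mx _ _); apply/rowP => i; rewrite !mxE coefD coefCM.
Qed.

Lemma WX_lin a x y j : WX (a *: x + y) j = a *: WX x j + WX y j.
Proof. by apply/rowP => i; rewrite !mxE xn_lin. Qed.

Lemma WZ_lin a x y j : WZ (a *: x + y) j = a *: WZ x j + WZ y j.
Proof. by apply/rowP => i; rewrite !mxE xn_lin. Qed.

Lemma phi_lin a x y : phi (a *: x + y) = a *: phi x + phi y.
Proof.
rewrite /phi -symvec_lin.
have -> : rep G t (WX (a *: x + y)) = a%:P * rep G t (WX x) + rep G t (WX y).
  by rewrite -repZ -repD; apply: rep_ext => j _; rewrite WX_lin.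
have -> : rep G t (WZ (a *: x + y)) = a%:P * rep G t (WZ x) + rep G t (WZ y).
  by rewrite -repZ -repD; apply: rep_ext => j _; rewrite WZ_lin.
by [].
Qed.

Lemma phiE x : x *m Bmx = phi x.
Proof. exact: lin_mx_eq phi_lin x. Qed.

Lemma idx_lt j s : (j < t.+1)%N -> (s < n - k)%N -> (j * (n - k) + s < R)%N.
Proof.
move=> hj hs; rewrite addn1.
have : (j.+1 * (n - k) <= t.+1 * (n - k))%N by rewrite leq_mul2r hj orbT.
rewrite mulSn; lia.
Qed.

Lemma xn_at x j s (hj : (j < t.+1)%N) (hs : (s < n - k)%N) :
  xn x (j * (n - k) + s) = x 0 (Ordinal (idx_lt hj hs)).
Proof. by rewrite -xn_ord. Qed.

Lemma decomp (r : 'I_R) : exists j s, [/\ (j < t.+1)%N, (s < n - k)%N & (r : nat) = j * (n - k) + s]%N.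
Proof.
have hr := ltn_ord r.
have hnk : (0 < n - k)%N.
  have : (0 < (t + 1) * (n - k))%N by apply: leq_ltn_trans (leq0n r) hr.
  by rewrite muln_gt0 => /andP [].
exists ((r : nat) %/ (n - k))%N, ((r : nat) %% (n - k))%N; split.
- by rewrite ltn_divLR //; apply: (leq_trans hr); rewrite addn1.
- by rewrite ltn_mod.
- exact: divn_eq.
Qed.

Lemma Bmx_free : row_free Bmx.
Proof.
apply: inj_row_free => v; rewrite phiE /phi /symvec /= => /eqP.
rewrite row_mx_eq0 => /andP [/eqP h1 /eqP h2].
have sz W : (size (rep G t W) <= N)%N by rewrite /Nt addn1; apply: size_rep.
have hX := rep_inj hGH (poly_trunc0 (sz _) h1).
have hZ := rep_inj hGH (poly_trunc0 (sz _) h2).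
apply/rowP => r; rewrite mxE.
have [j [s [hj hs er]]] := decomp r.
case: (ltnP s kk) => hk.
  have := congr1 (fun w : 'rV_kk => w 0 (Ordinal hk)) (hX j hj).
  by rewrite !mxE /= (xn_at _ hj hs) => <-; congr (v 0 _); apply: val_inj.
have hs' : (s - kk < kk)%N by lia.
have := congr1 (fun w : 'rV_kk => w 0 (Ordinal hs')) (hZ j hj).
rewrite !mxE /= -addnA subnKC // (xn_at _ hj hs) => <-.
by congr (v 0 _); apply: val_inj.
Qed.

Definition acc (w : 'rV[F]_kk) (s : nat) : F := \sum_(i < kk | val i == s) w 0 i.

Lemma acc_ord w (i : 'I_kk) : acc w i = w 0 i.
Proof. by rewrite /acc (big_pred1 i). Qed.

Definition Dmx (Wa Wb : nat -> 'rV[F]_kk) : 'rV[F]_R :=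
  \row_(r < R) (if ((r : nat) %% (n - k) < kk)%N
                then acc (Wa ((r : nat) %/ (n - k))%N) ((r : nat) %% (n - k))%N
                else acc (Wb ((r : nat) %/ (n - k))%N) ((r : nat) %% (n - k) - kk)%N).

Lemma WX_Dmx Wa Wb j : (j < t.+1)%N -> WX (Dmx Wa Wb) j = Wa j.
Proof.
move=> hj; apply/rowP => i; rewrite mxE.
have hs : (i < n - k)%N by rewrite hk2; apply: leq_trans (ltn_ord i) (leq_addr _ _).
have hnk : (0 < n - k)%N by apply: leq_ltn_trans hs.
rewrite (xn_at _ hj hs) mxE /= divnMDl // divn_small // addn0 modnMDl modn_small //.
by rewrite ltn_ord acc_ord.
Qed.

Lemma WZ_Dmx Wa Wb j : (j < t.+1)%N -> WZ (Dmx Wa Wb) j = Wb j.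
Proof.
move=> hj; apply/rowP => i; rewrite mxE.
have hs : (kk + i < n - k)%N by rewrite hk2 ltn_add2l.
have hnk : (0 < n - k)%N by apply: leq_ltn_trans hs.
rewrite -addnA (xn_at _ hj hs) mxE /= divnMDl // divn_small // addn0 modnMDl modn_small //.
by rewrite ltnNge leq_addr /= addKn acc_ord.
Qed.

Lemma condS2_at : exists B : 'M[F]_(R, N + N),
    row_free B /\
    forall v : 'rV[F]_(N + N),
      (exists g, Sfam n S0 t g /\ symvec N g = v) <-> (v <= B)%MS.
Proof.
exists Bmx; split; first exact: Bmx_free.
move=> v; split.
  case=> g [hs <-]; have [pg [Wa ea] [Wb eb]] := Sfam_Pt hCG hself hs.
  apply/submxP; exists (Dmx Wa Wb); rewrite phiE /phi /symvec /= ea eb.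
  have -> : rep G t (WX (Dmx Wa Wb)) = rep G t Wa by apply: rep_ext => j hj; rewrite WX_Dmx.
  by have -> : rep G t (WZ (Dmx Wa Wb)) = rep G t Wb by apply: rep_ext => j hj; rewrite WZ_Dmx.
case/submxP => D ->; exists (Pauli 0 (rep G t (WX D)) (rep G t (WZ D))); split; last by rewrite phiE.
by apply: (Pt_Sfam hCG hself); split => //=; eexists.
Qed.

End T.
Lemma condS2_ok : condS2 n k (n * mu) S0.
Proof. move=> t; exact: condS2_at. Qed.

End Stab2.

Section Wt.
Variable F : finFieldType.

Lemma seq_wt_iota (v : {poly F}) :
  seq_wt v = count (fun i => v`_i != 0) (iota 0 (size v)).
Proof. by rewrite /seq_wt -{1}(mkseq_nth 0 v) /mkseq count_map. Qed.

Lemma wt_le_pwt (e : pauli F) : (seq_wt (xa e) <= pwt e)%N /\ (seq_wt (zb e) <= pwt e)%N.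
Proof.
rewrite /pwt !seq_wt_iota; split.
  rewrite -(subnKC (leq_maxl (size (xa e)) (size (zb e)))) iotaD count_cat.
  apply: leq_trans (leq_addr _ _); apply: sub_count => i /= ->; done.
rewrite -(subnKC (leq_maxr (size (xa e)) (size (zb e)))) iotaD count_cat.
apply: leq_trans (leq_addr _ _); apply: sub_count => i /= ->; by rewrite orbT.
Qed.

Lemma pwt_x (c : 'Z_(pchr F)) (v : {poly F}) : pwt (Pauli c v 0) = seq_wt v.
Proof.
rewrite /pwt seq_wt_iota /= size_poly0 maxn0; apply: eq_count => i.
by rewrite coef0 eqxx orbF.
Qed.

Lemma center_char (z : pauli F) : center (@Pinf F) z <-> xa z = 0 /\ zb z = 0.
Proof.
split.
  case=> _ hc; apply: (center_vec (A := @Pinf F)) => //.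
move=> [ea eb]; split => // g _.
rewrite /pcommute /pmul ea eb dotp0l dotp0r add0r addr0 [ph z + _]addrC.
by rewrite [zb g + 0]addrC.
Qed.

Lemma is_min_transfer (W1 W2 : nat -> Prop) :
  (forall w, W1 w -> W2 w) -> (forall w, W2 w -> exists2 w', W1 w' & (w' <= w)%N) ->
  forall d, is_min W1 d <-> is_min W2 d.
Proof.
move=> h12 h21 d; split.
  case=> h1 hm; split; first exact: h12.
  by move=> e /h21 [w' /hm h1' le]; apply: leq_trans h1' le.
case=> h2 hm; have [w' h1 le] := h21 _ h2.
have e : w' = d by apply/eqP; rewrite eqn_leq le hm //; apply: h12.
by split; [rewrite -e | move=> e' /h12 /hm].
Qed.

End Wt.

Section Stab3.
Variables (F : finFieldType) (n kk mu : nat) (G : 'M[{poly F}]_(kk, n)) (H : 'M[{poly F}]_(n, kk)).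
Variable C : {poly F} -> Prop.
Hypothesis hCG : forall v, C v <-> exists u, v = sigma (u *m G).
Hypothesis hself : forall v, C v -> edual C v.

Local Notation S0 := (S0 G).
Local Notation Sfull := (Sfull n S0).

Lemma dotpCl (c : F) (u v : {poly F}) : dotp (c%:P * u) v = c * dotp u v.
Proof. by rewrite dotpC mul_polyC dotpZr dotpC. Qed.

Lemma centralizer_char e :
  centralizer (@Pinf F) Sfull e <-> edual C (xa e) /\ edual C (zb e).
Proof.
split.
  case=> _ hc; split => u hu; apply: trZ_key => l.
  - have hs : Sfull (Pauli 0 0 (l%:P * u)).
      by apply/(Sfull_good hCG hself); split => //=; [apply: (C0 hCG) | apply: (CZ hCG)].
    have := congr1 (@ph F) (hc _ hs); rewrite /pmul /= dotp0r dotpCl addr0 add0r => /addrI.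
    by move=> ->.
  - have hs : Sfull (Pauli 0 (l%:P * u) 0).
      by apply/(Sfull_good hCG hself); split => //=; [apply: (CZ hCG) | apply: (C0 hCG)].
    have := congr1 (@ph F) (hc _ hs); rewrite /pmul /= dotp0l addr0 add0r dotpC dotpCl => /addrI.
    by move=> ->.
move=> [ha hb]; split => // s /(Sfull_good hCG hself) [ps cx cz].
rewrite /pcommute /pmul ps (ha _ cz) dotpC (hb _ cx) addr0 add0r [xa e + _]addrC.
by rewrite [zb e + _]addrC.
Qed.

Lemma ZS_char e :
  (exists z s, [/\ center (@Pinf F) z, Sfull s & e = pmul z s]) <-> C (xa e) /\ C (zb e).
Proof.
split.
  move=> [z [s [/center_char [za zb0] /(Sfull_good hCG hself) [_ cx cz] ->]]].
  by rewrite /pmul /= za zb0 !add0r.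
move=> [ca cb]; exists (Pauli (ph e) 0 0), (Pauli 0 (xa e) (zb e)); split.
- by apply/center_char.
- by apply/(Sfull_good hCG hself); split.
- by rewrite /pmul /= dotp0l trZ0 !addr0 !add0r -pauli_eta.
Qed.

Lemma free_dist_ok d :
  is_min_wt (fun v => edual C v /\ ~ C v) d <-> free_dist n S0 d.
Proof.
apply: is_min_transfer.
  move=> w [v [[hd hn] nz <-]].
  exists (Pauli 0 v 0); split.
  - apply/centralizer_char; split => //= u _; exact: dotp0r.
  - by move/ZS_char => /= [].
  - exact: pwt_x.
move=> w [e [/centralizer_char [ha hb] hz <-]].
have [la lb] := wt_le_pwt e.
case: (classic (C (xa e))) => hca.
  have hcb : ~ C (zb e) by move=> hcb; apply: hz; apply/ZS_char.
  exists (seq_wt (zb e)) => //; exists (zb e); split => //.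
  by apply/eqP => e0; apply: hcb; rewrite e0; apply: (C0 hCG).
exists (seq_wt (xa e)) => //; exists (xa e); split => //.
by apply/eqP => e0; apply: hca; rewrite e0; apply: (C0 hCG).
Qed.

Lemma pure_ok d : is_min_wt (edual C) d -> is_pure n S0 d.
Proof.
move=> [_ hm] g /(Sfull_good hCG hself) [pg ca cb] hlt.
have [la lb] := wt_le_pwt g.
have za : xa g = 0.
  case: (eqVneq (xa g) 0) => [//|nz]; exfalso; have := hm _ (ex_intro _ (xa g) (And3 (hself ca) nz erefl)).
  by move=> h; move: (leq_trans h la); rewrite leqNgt hlt.
have zb0 : zb g = 0.
  case: (eqVneq (zb g) 0) => [//|nz]; exfalso; have := hm _ (ex_intro _ (zb g) (And3 (hself cb) nz erefl)).
  by move=> h; move: (leq_trans h lb); rewrite leqNgt hlt.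
by apply/center_char.
Qed.


End Stab3.

Section Deg.
Variables (F : finFieldType) (L : fieldExtType F) (beta : L).
Hypothesis hbas : basis_of fullv [:: beta; beta ^+ #|F|].
Variables (n kk mu delta : nat) (G : 'M[{poly F}]_(kk, n)) (H : 'M[{poly F}]_(n, kk)).
Variable C : {poly F} -> Prop.
Hypothesis hGH : G *m H = 1%:M.
Hypothesis hCG : forall v, C v <-> exists u, v = sigma (u *m G).
Hypothesis hself : forall v, C v -> edual C v.
Hypothesis hd1 : delta = (\sum_(i < kk) row_deg G i)%N.
Hypothesis hd2 : delta = max_minor_deg G.

Local Notation f := (map_poly (GRing.in_alg L)).
Local Notation bq := (beta ^+ #|F|).
Definition GL := map_mx f G.

Lemma tauE (g : pauli F) : tau beta g = f (xa g) * beta%:P + f (zb g) * bq%:P.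
Proof.
apply/polyP => i; rewrite coef_poly coefD !coefMC !coef_map /= !mulr_algl.
case: ltnP => // hi.
by rewrite !nth_default ?scale0r ?addr0 //; apply: leq_trans hi; rewrite ?leq_maxl ?leq_maxr.
Qed.

Lemma row_deg_map i : row_deg GL i = row_deg G i.
Proof. by apply: eq_bigr => j _; rewrite mxE size_map_poly. Qed.

Lemma minor_map : max_minor_deg GL = max_minor_deg G.
Proof.
apply: eq_bigr => h _.
have -> : colsub h GL = map_mx f (colsub h G) by apply/matrixP => i j; rewrite !mxE.
by rewrite det_map_mx size_map_poly.
Qed.

Definition X2 : 2.-tuple L := in_tuple [:: beta; bq].

Lemma decompL (y : L) : y = coord X2 0 y *: beta + coord X2 1 y *: bq.
Proof.
have hb : basis_of fullv X2 by [].
rewrite {1}(coord_basis hb (memvf y)) !big_ord_recr big_ord0 /= add0r.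
by congr (coord X2 _ y *: _ + coord X2 _ y *: _); apply: val_inj.
Qed.

Lemma decompP (p : {poly L}) :
  p = beta%:P * f (map_poly (coord X2 0) p) + bq%:P * f (map_poly (coord X2 1) p).
Proof.
apply/polyP => i; rewrite coefD !coefCM !coef_map /= !mulr_algr.
by rewrite {1}(decompL p`_i).
Qed.

Lemma has_degree_ok : exists kk' mu',
  is_conv_code n kk' delta mu' (fun v => exists g, Sfull n (S0 G) g /\ v = tau beta g).
Proof.
exists kk, (\max_(i < kk) row_deg G i)%N, GL; split.
- exists (map_mx f H); by rewrite /GL -map_mxM hGH map_mx1.
- by rewrite hd1; apply: eq_bigr => i _; rewrite row_deg_map.
- by rewrite minor_map.
- by apply: eq_bigr => i _; rewrite row_deg_map.
move=> v; split.
  move=> [g [/(Sfull_good hCG hself) [pg /hCG [ua ea] /hCG [ub eb]] ->]].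
  exists (beta%:P *: map_mx f ua + bq%:P *: map_mx f ub).
  rewrite tauE mulmxDl -!scalemxAl sigmaD !sigmaZ !comp_polyC /GL -!map_mxM.
  by rewrite !sigma_map ea eb [_ * beta%:P]mulrC [_ * bq%:P]mulrC.
move=> [u ->].
pose ua := map_mx (map_poly (coord X2 0)) u.
pose ub := map_mx (map_poly (coord X2 1)) u.
have eu : u = beta%:P *: map_mx f ua + bq%:P *: map_mx f ub.
  by apply/matrixP => i j; rewrite !mxE -decompP.
exists (Pauli 0 (sigma (ua *m G)) (sigma (ub *m G))); split.
  apply/(Sfull_good hCG hself); split => //=; apply/hCG; eexists; reflexivity.
rewrite tauE /= {1}eu mulmxDl -!scalemxAl sigmaD !sigmaZ !comp_polyC /GL -!map_mxM.
by rewrite !sigma_map [_ * beta%:P]mulrC [_ * bq%:P]mulrC.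
Qed.

End Deg.

Unset Implicit Arguments.
Set Strict Implicit.

Theorem mainTheorem5 (F : finFieldType) (L : fieldExtType F) (beta : L)
    (dimL : \dim {: L} = 2%N)
    (normal_basis : basis_of fullv [:: beta; beta ^+ #|F|])
    (n k delta mu : nat) (C : {poly F} -> Prop)
    (hkn : (k <= n)%N) (heven : ~~ odd (n - k))
    (hC : is_conv_code n (n - k)./2 delta mu C)
    (hself : forall v, C v -> edual C v) :
  exists S0 : pauli F -> Prop,
    [/\ is_conv_stab_code n k (n * mu) S0,
        has_degree n S0 beta delta,
        (forall d, is_min_wt (fun v => edual C v /\ ~ C v) d <-> free_dist n S0 d) &
        (forall d, is_min_wt (fun v => edual C v /\ ~ C v) d ->
                   is_min_wt (edual C) d -> is_pure n S0 d)].
Proof.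
case: hC => G [[H hGH] hd1 hd2 hmu hCG].
set kk := ((n - k)./2)%N in G H hGH hd1 hd2 hmu hCG *.
have hk2 : (n - k = kk + kk)%N.
  by rewrite addnn /kk -[LHS](odd_double_half (n - k)) (negbTE heven).
have hGsz : forall i j, (size (G i j) <= mu.+1)%N.
  move=> i j; rewrite hmu.
  apply: leq_trans (leqSpred _) _; rewrite ltnS.
  apply: leq_trans (leq_bigmax (F := fun i => row_deg G i) i).
  exact: (leq_bigmax (F := fun j => (size (G i j)).-1) j).
exists (S0 G); split.
- split.
  + exact: S0_inP hGsz.
  + exact: Pt_subgroup hCG hself 0%N.
  + move=> g h hg hh; apply: (good_comm hself); [apply: (Pt_good hCG hg) | apply: (Pt_good hCG hh)].
  + move=> t _ M N hM hN; apply: (good_comm hself); last exact: (Pt_good hCG hN).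
    have [p a b] := @Pt_good _ _ _ _ _ hCG 0%N _ hM.
    by split => //=; apply: (CshiftX hCG).
  + split; [exact: condS2_ok hGH hGsz hCG hself hk2 | exact: condS3_ok hCG hself].
- rewrite /has_degree; apply: (has_degree_ok normal_basis hGH hCG hself hd1 hd2).
- move=> d; exact: free_dist_ok hCG hself d.
- move=> d _; exact: pure_ok hCG hself d.
Qed.
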